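(* Let $\varphi\colon Y\to X$ be a torus-equivariant embedding of a normal toric variety $Y$ into a smooth toric variety $X$ with no torus factors, let $L\subseteq\mathbb{Z}^n$ be the associated lattice, and let $\psi\colon L_{\mathbb{R}}\to\mathbb{Z}^n$ be the ceiling stratification with $L_{\mathbb{R}}$ given its standard cell structure. Then (i) the real torus $T_\varphi$ equals $L_{\mathbb{R}}/L$ and the cell structure on it induced from the standard cell structure of $L_{\mathbb{R}}$ coincides with the stratification of $T_\varphi$ by the toric arrangement of Hanlon–Hicks–Lazarev; and (ii) the line bundle that the Hanlon–Hicks–Lazarev construction assigns to a cell $\sigma'\subseteq L_{\mathbb{R}}/L$ is $\mathcal{O}_X(-\psi(\sigma))$, where $\sigma\subseteq L_{\mathbb{R}}$ is any cell representing $\sigma'$.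
   Context: Let $X$ be a smooth toric variety with no torus factors whose fan has $n$ rays with primitive generators $\bm u_1,\dots,\bm u_n\in N_X$, and $Y$ a normal toric variety with a torus-equivariant embedding $\varphi\colon Y\to X$, corresponding to an injective $\mathbb{Z}$-linear map $\overline\varphi\colon N_Y\to N_X$ of one-parameter-subgroup lattices with dual surjection $\overline\varphi^*\colon M_X\to M_Y$ of character lattices. Set $L=\ker\overline\varphi^*\subseteq M_X$, embedded in $\mathbb{Z}^n$ by $\nu(\bm m)=(\bm u_1\cdot\bm m,\dots,\bm u_n\cdot\bm m)$; $\mathbb{Z}^n$ is identified with the group of torus-invariant divisors of $X$ and $\mathcal{O}_X(\bm u)$ denotes the corresponding line bundle. $L_{\mathbb{R}}=L\otimes\mathbb{R}\subseteq\mathbb{R}^n$ has the standard cell structure: the polyhedral cell structure from the periodic arrangement of affine hyperplanes $\{\bm p\in L_{\mathbb{R}}:p_i=j\}$, $1\le i\le n$, $j\in\mathbb{Z}$ (equivalently $\{\bm q: \bm u_i\cdot\bm q=j\}$); it descends to a cell structure on $L_{\mathbb{R}}/L$. The ceiling stratification is $\psi(\bm p)=(\lceil p_1\rceil,\dots,\lceil p_n\rceil)$, constant on open cells. The Hanlon–Hicks–Lazarev (HHL) data: the real torus $T_\varphi$ is the kernel of the induced map $(M_X\otimes\mathbb{R})/M_X\to(M_Y\otimes\mathbb{R})/M_Y$; it is stratified by the toric arrangement of subtori cut out by the conditions $\bm u_i\cdot\bm q\in\mathbb{Z}$, $1\le i\le n$; and to each point $\bm q\in M_X\otimes\mathbb{R}$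 HHL assign the line bundle $\mathcal{O}_X\big((\lfloor-\bm u_1\cdot\bm q\rfloor,\dots,\lfloor-\bm u_n\cdot\bm q\rfloor)\big)$, which is constant on strata. *)

(* Defs.v *)
From HB Require Import structures.
From mathcomp Require Import all_boot all_order all_algebra generic_quotient.
From mathcomp Require Import all_classical all_reals all_analysis.
Set Implicit Arguments. Unset Strict Implicit. Unset Printing Implicit Defensive.
Import Order.TTheory GRing.Theory Num.Theory.
Local Open Scope ring_scope.
Local Open Scope classical_set_scope.
Local Open Scope quotient_scope.
Import numFieldNormedType.Exports.

(* M_X = Z^d (row vectors 'rV[int]_d), N_X = Z^d (dual).
   The rays u_1..u_n are the columns of U : 'M[int]_(d,n), so that
   nu(m) = m *m U = (u_1.m, ..., u_n.m).  The dual surjection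
   phibar^* : M_X = Z^d -> M_Y = Z^k is m |-> m *m A for A : 'M[int]_(d,k)
   (phibar : N_Y -> N_X is then A^T).  Real points of M_X (x) R are 'rV[R]_d. *)

Section Defs.
Variable R : realType.

Definition zvec m (v : 'rV[R]_m) : Prop := forall j, v 0 j \is a Num.int.

Definition torus_rel d : rel 'rV[R]_d := fun x y => `[< zvec (x - y) >].

Lemma torus_rel_refl d : reflexive (@torus_rel d).
Proof. by move=> x; apply/asboolP => j; rewrite subrr !mxE rpred0. Qed.

Lemma torus_rel_sym d : symmetric (@torus_rel d).
Proof.
move=> x y; apply/asboolP/asboolP => H j;
  by rewrite -opprB mxE rpredN; apply: H.
Qed.

Lemma torus_rel_trans d : transitive (@torus_rel d).
Proof.
move=> y x z /asboolP Hxy /asboolP Hyz; apply/asboolP => j.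
have -> : x - z = (x - y) + (y - z) by rewrite addrA subrK.
by rewrite mxE rpredD.
Qed.

Canonical torus_equiv d := EquivRel (@torus_rel d)
  (@torus_rel_refl d) (@torus_rel_sym d) (@torus_rel_trans d).

(* The real torus (M_X (x) R) / M_X = R^d / Z^d with the quotient topology. *)
Definition torus d := quotient_topology {eq_quot (@torus_equiv d)}.

Definition piT d (q : 'rV[R]_d) : torus d := \pi_(torus d) q.

Definition mxR m n (B : 'M[int]_(m, n)) : 'M[R]_(m, n) := map_mx intr B.

(* T_phi : the kernel of the induced map R^d/Z^d -> R^k/Z^k, q |-> q *m A. *)
Definition Tphi d k (A : 'M[int]_(d, k)) : set (torus d) :=
  [set t | exists q : 'rV[R]_d, piT q = t /\ zvec (q *m mxR A)].

(* L = ker phibar^* in M_X. *)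
Definition inL d k (A : 'M[int]_(d, k)) (l : 'rV[int]_d) : Prop := l *m A = 0.

(* L_R = L (x) R, realized as the real span of L inside M_X (x) R = R^d. *)
Definition LR d k (A : 'M[int]_(d, k)) : set 'rV[R]_d :=
  [set p | exists r (B : 'M[int]_(r, d)) (c : 'rV[R]_r),
     (forall i, inL A (row i B)) /\ p = c *m mxR B].

(* The open cell of the standard cell structure of L_R (hyperplanes
   {p : u_i.p = j}) containing p: the points of L_R lying in the same
   position as p with respect to every hyperplane u_i.q = j. *)
Definition cell d k n (A : 'M[int]_(d, k)) (U : 'M[int]_(d, n)) (p : 'rV[R]_d)
  : set 'rV[R]_d :=
  [set p' | LR A p' /\ forall i,
     Num.floor ((p' *m mxR U) 0 i) = Num.floor ((p *m mxR U) 0 i) /\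
     Num.ceil ((p' *m mxR U) 0 i) = Num.ceil ((p *m mxR U) 0 i)].

Definition psi d n (U : 'M[int]_(d, n)) (p : 'rV[R]_d) : 'rV[int]_n :=
  \row_i Num.ceil ((p *m mxR U) 0 i).

(* Set of indices i with u_i.q in Z, for a point of the torus (well defined
   since U is integral). *)
Definition intset d n (U : 'M[int]_(d, n)) (t : torus d) : set 'I_n :=
  [set i | ((repr t *m mxR U) 0 i) \is a Num.int].

(* Stratum of t in the stratification of T_phi by the toric arrangement of
   the subtori {u_i.q in Z}: the connected component of t in the locus of
   points of T_phi lying on exactly the same subtori as t. *)
Definition HHL_stratum d k n (A : 'M[int]_(d, k)) (U : 'M[int]_(d, n))
  (t : torus d) : set (torus d) :=
  connected_component [set t' | Tphi A t' /\ intset U t' = intset U t] t.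

(* HHL line bundle at q in M_X (x) R: O_X((floor(-u_i.q))_i), as a divisor. *)
Definition HHL_divisor d n (U : 'M[int]_(d, n)) (q : 'rV[R]_d) : 'rV[int]_n :=
  \row_i Num.floor (- (q *m mxR U) 0 i).

End Defs.

Arguments piT R {d} q.
Arguments Tphi R {d k} A _.
Arguments LR R {d k} A _.
Arguments cell R {d k n} A U p _.
Arguments psi R {d n} U p.
Arguments intset R {d n} U t _.
Arguments HHL_stratum R {d k n} A U t _.
Arguments HHL_divisor R {d n} U q.

(* O_X(D) = O_X(D') iff D - D' is principal, i.e. D - D' = div(chi^m) = nu(m). *)
Definition lin_equiv d n (U : 'M[int]_(d, n)) (D D' : 'rV[int]_n) : Prop :=
  exists m : 'rV[int]_d, D - D' = m *m U.

Definition primitive_cols d n (U : 'M[int]_(d, n)) : Prop :=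
  forall i, \big[gcdz/0]_(j < d) U j i = 1.

(* Main.v *)
Require Import Defs.
From HB Require Import structures.
From mathcomp Require Import all_boot all_order all_algebra generic_quotient.
From mathcomp Require Import all_classical all_reals all_analysis.
Import Order.TTheory GRing.Theory Num.Theory.
Import numFieldNormedType.Exports.
Local Open Scope ring_scope.
Local Open Scope classical_set_scope.
From mathcomp Require Import lra.
Section Alg.
Variable R : realType.

Lemma mxR_mul m n p (M : 'M[int]_(m, n)) (N : 'M[int]_(n, p)) :
  mxR R (M *m N) = mxR R M *m mxR R N.
Proof. exact: map_mxM. Qed.

Lemma mxR_inj m n : injective (@mxR R m n).
Proof.
move=> M N /matrixP H; apply/matrixP => i j.
by have := H i j; rewrite !mxE => /eqP; rewrite eqr_int => /eqP.
Qed.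

Lemma mxR_add m n (M N : 'M[int]_(m, n)) : mxR R (M + N) = mxR R M + mxR R N.
Proof. by apply/matrixP => i j; rewrite !mxE rmorphD. Qed.

Lemma mxR_opp m n (M : 'M[int]_(m, n)) : mxR R (- M) = - mxR R M.
Proof. by apply/matrixP => i j; rewrite !mxE rmorphN. Qed.

Lemma mxR_ratr m n (M : 'M[int]_(m, n)) :
  mxR R M = map_mx (ratr : rat -> R) (map_mx (intr : int -> rat) M).
Proof. by apply/matrixP => i j; rewrite !mxE ratr_int. Qed.

Lemma zvec_mxR m (z : 'rV[int]_m) : zvec (mxR R z).
Proof. by move=> j; rewrite mxE intr_int. Qed.

Lemma zvecE m (v : 'rV[R]_m) : zvec v -> v = mxR R (\row_j Num.floor (v 0 j)).
Proof.
by move=> H; apply/matrixP => i j; rewrite ord1 !mxE floorK //; apply: H.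
Qed.

Lemma LR_ker d k (A : 'M[int]_(d, k)) (p : 'rV[R]_d) :
  LR R A p <-> p *m mxR R A = 0.
Proof.
split.
  move=> [r [B [c [HB ->]]]].
  have BA : B *m A = 0.
    apply/row_matrixP => i; rewrite row_mul row0; exact: HB.
  by rewrite -mulmxA -mxR_mul BA /mxR map_mx0 mulmx0.
move=> Hp.
set AQ := map_mx (intr : int -> rat) A.
set K := kermx AQ.
have HK : K *m AQ = 0 by exact: mulmx_ker.
have HKR : map_mx (ratr : rat -> R) K = kermx (map_mx ratr AQ) by rewrite map_kermx.
clearbody K.
set D : rat := \prod_(ij : 'I_d * 'I_d) (denq (K ij.1 ij.2))%:~R.
have D0 : D != 0.
  by rewrite /D; apply/prodf_neq0 => ij _; rewrite intr_eq0 denq_neq0.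
have Dint i j : K i j * D \is a Num.int.
  rewrite /D (bigD1 (i, j)) //= mulrA -numqE.
  by apply: rpredM; [exact: intr_int | apply: rpred_prod => ? _; exact: intr_int].
set B : 'M[int]_d := \matrix_(i, j) Num.floor (K i j * D).
have BQ : map_mx (intr : int -> rat) B = D *: K.
  by apply/matrixP => i j; rewrite !mxE (floorK (Dint i j)) mulrC.
have BR : mxR R B = ratr D *: map_mx ratr K.
  by rewrite mxR_ratr BQ map_mxZ.
have BA : B *m A = 0.
  apply: mxR_inj; rewrite mxR_mul BR -scalemxAl mxR_ratr -map_mxM HK.
  by rewrite map_mx0 scaler0 /mxR map_mx0.
have : (p <= kermx (mxR R A))%MS by apply/sub_kermxP.
rewrite mxR_ratr -HKR => /submxP [w Hw].
exists d, B, ((ratr D)^-1 *: w); split.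
  by move=> i; rewrite /inL -row_mul BA row0.
rewrite Hw BR -scalemxAl -scalemxAr scalerA mulVf ?scale1r //.
by rewrite fmorph_eq0.
Qed.

End Alg.
Arguments zvecE {R m v}.
Arguments LR_ker {R d k A p}.
Arguments mxR_inj {R m n}.
Arguments zvec_mxR {R m}.
Arguments mxR_mul {R m n p}.
Arguments mxR_opp {R m n}.
Arguments mxR_add {R m n}.
Section Main.
Variable R : realType.

Lemma piT_eq d (x y : 'rV[R]_d) : piT R x = piT R y <-> zvec (x - y).
Proof.
rewrite /piT; split.
  by move/eqquotP => /asboolP.
by move=> H; apply/eqquotP; apply/asboolP.
Qed.

Lemma piT_repr d (t : torus R d) : piT R (repr t) = t.
Proof. by rewrite /piT reprK. Qed.

Lemma piT_surj d (t : torus R d) : exists x, piT R x = t.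
Proof. by exists (repr t); apply: piT_repr. Qed.

Lemma piT_shift d (x : 'rV[R]_d) (z : 'rV[int]_d) : piT R (x + mxR R z) = piT R x.
Proof.
apply/piT_eq => j; rewrite addrAC subrr add0r; exact: zvec_mxR.
Qed.

Lemma piT_eqE d (x y : 'rV[R]_d) : piT R x = piT R y -> exists z, x = y + mxR R z.
Proof.
move/piT_eq/zvecE => H; exists (\row_j Num.floor ((x - y) 0 j)).
by rewrite -H addrC subrK.
Qed.

Lemma LR_sub d k (A : 'M[int]_(d, k)) x y : LR R A x -> LR R A y -> LR R A (x - y).
Proof.
move=> /LR_ker Hx /LR_ker Hy; apply/LR_ker; by rewrite mulmxBl Hx Hy subrr.
Qed.

Lemma int_abs_lt1 (y : R) : y \is a Num.int -> `|y| < 1 -> y = 0.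
Proof.
move=> /intrP [m ->] H.
have Hm : `|m| < 1 by rewrite -(ltr_int R) intr_norm.
suff -> : m = 0 by [].
by apply/eqP; rewrite -normr_eq0 eq_le normr_ge0 andbT -(ltzD1 _ 0).
Qed.

End Main.
Arguments piT_eq {R d x y}.
Arguments piT_eqE {R d x y}.
Arguments piT_shift {R d}.
Arguments LR_sub {R d k A x y}.
Arguments piT_repr {R d}.
Arguments int_abs_lt1 {R y}.
Section Parts.
Variable R : realType.
Variables (d k n : nat) (U : 'M[int]_(d, n)) (A : 'M[int]_(d, k)).
Hypothesis Asurj : forall y : 'rV[int]_k, exists m : 'rV[int]_d, m *m A = y.

Lemma part_a : piT R @` LR R A = Tphi R A.
Proof.
apply/seteqP; split.
  move=> t [p Hp <-]; exists p; split => //; move/LR_ker: Hp => ->.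
  by move=> j; rewrite mxE rpred0.
move=> t [q [<- Hq]].
have [m Hm] := Asurj (\row_j Num.floor ((q *m mxR R A) 0 j)).
exists (q - mxR R m).
  apply/LR_ker; rewrite mulmxBl -mxR_mul Hm -(zvecE Hq) subrr //.
by rewrite -mxR_opp piT_shift.
Qed.

Lemma part_b (p p' : 'rV[R]_d) : LR R A p -> LR R A p' ->
  piT R p = piT R p' <-> exists l : 'rV[int]_d, inL A l /\ p - p' = mxR R l.
Proof.
move=> Hp Hp'; split.
  move/piT_eq => Hz; exists (\row_j Num.floor ((p - p') 0 j)); split; last first.
    exact: zvecE.
  apply: (@mxR_inj R); rewrite mxR_mul -(zvecE Hz) /mxR map_mx0.
  by apply/LR_ker; apply: LR_sub.
move=> [l [_ Hl]]; apply/piT_eq; rewrite Hl; exact: zvec_mxR.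
Qed.

Lemma part_ii (p q : 'rV[R]_d) : LR R A p -> (piT R @` cell R A U p) (piT R q) ->
  lin_equiv U (HHL_divisor R U q) (- psi R U p).
Proof.
move=> Hp [c [Hc1 Hc2] Hcq].
have [z Hz] := piT_eqE (esym Hcq).
have HQ : q *m mxR R U = c *m mxR R U + mxR R (z *m U).
  by rewrite Hz mulmxDl mxR_mul.
have HC : forall j, Num.ceil ((c *m mxR R U) 0 j) = Num.ceil ((p *m mxR R U) 0 j).
  by move=> j; case: (Hc2 j).
exists (- z); apply/matrixP => i j; rewrite ord1.
rewrite /HHL_divisor /psi; move: (HC j); rewrite HQ mulNmx.
set C := c *m mxR R U; set P := p *m mxR R U; set Z := z *m U => HCj; clearbody C P Z.
rewrite !mxE opprD floorDrz ?rpredN ?intr_int // [Num.floor (- C 0 j)]floorNceil !opprK HCj.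
by rewrite -rmorphN intrKfloor addrAC addNr add0r.
Qed.

End Parts.
Section Samec.
Variable R : realType.
Definition samec (a b : R) := Num.floor a = Num.floor b /\ Num.ceil a = Num.ceil b.

Lemma ceil_int (x : R) : x \is a Num.int -> Num.ceil x = Num.floor x.
Proof. by move=> H; rewrite ceil_floor H addr0. Qed.

Lemma ceil_nint (x : R) : x \isn't a Num.int -> Num.ceil x = Num.floor x + 1.
Proof. by move=> H; rewrite ceil_floor H. Qed.

Lemma samec_int a b : b \is a Num.int -> samec a b -> a = b.
Proof.
move=> Hb [Hf Hc].
have Ha : a \is a Num.int.
  apply: contraT => Ha; move: Hc; rewrite ceil_nint // ceil_int // Hf.
  by move/(congr1 (fun x => x - Num.floor b)); rewrite addrAC subrr add0r => /eqP; rewrite oner_eq0.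
by rewrite -(floorK Ha) -(floorK Hb) Hf.
Qed.

Lemma samec_nint a b : b \isn't a Num.int ->
  (samec a b <-> (Num.floor b)%:~R < a < (Num.floor b + 1)%:~R).
Proof.
move=> Hb; split.
  move=> [Hf Hc].
  have Ha : a \isn't a Num.int.
    apply/negP => Ha; move: Hc; rewrite ceil_int // ceil_nint // Hf.
    by move/(congr1 (fun x => x - Num.floor b)); rewrite addrAC subrr add0r => /eqP; rewrite eq_sym oner_eq0.
  have /andP [H1 H2] := floor_itv a.
  rewrite -Hf H2 andbT lt_neqAle H1 andbT.
  by apply: contraNneq Ha => <-; rewrite intr_int.
move=> /andP [H1 H2].
have Hf : Num.floor a = Num.floor b.
  by apply: floor_def; rewrite H2 andbT ltW.
have Ha : a \isn't a Num.int.
  apply/negP => Ha; move: H1; rewrite -(floorK Ha) Hf.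
  by rewrite ltxx.
split => //; by rewrite ceil_nint // ceil_nint // Hf.
Qed.

Lemma samec_refl a : samec a a. Proof. by []. Qed.
Lemma samec_sym a b : samec a b -> samec b a.
Proof. by move=> [? ?]; split. Qed.
Lemma samec_trans a b c : samec a b -> samec b c -> samec a c.
Proof. by move=> [H1 H2] [H3 H4]; split; [rewrite H1 H3 | rewrite H2 H4]. Qed.

Lemma samec_shift a b (y : R) : y \is a Num.int -> samec a b -> samec (a + y) (b + y).
Proof. by move=> Hy [Hf Hc]; split; rewrite ?floorDrz ?ceilDrz // ?Hf ?Hc. Qed.

Lemma samec_conv a b c (s : R) : 0 <= s <= 1 -> samec a c -> samec b c ->
  samec (a + s * (b - a)) c.
Proof.
move=> /andP [s0 s1] Ha Hb.
have [Hc|Hc] := boolP (c \is a Num.int).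
  by rewrite (samec_int _ _ Hc Ha) (samec_int _ _ Hc Hb) subrr mulr0 addr0.
move: Ha Hb; rewrite !samec_nint // => /andP [a1 a2] /andP [b1 b2].
move: a1 a2 b1 b2; set lo := (Num.floor c)%:~R; set hi := (Num.floor c + 1)%:~R => a1 a2 b1 b2.
have [ab|ba] := leP a b.
  have h1 : 0 <= s * (b - a) by rewrite mulr_ge0 // subr_ge0.
  have h2 : 0 <= (1 - s) * (b - a) by rewrite mulr_ge0 // subr_ge0.
  apply/andP; split; lra.
have h1 : 0 <= s * (a - b) by rewrite mulr_ge0 // subr_ge0 ltW.
have h2 : 0 <= (1 - s) * (a - b) by rewrite mulr_ge0 // subr_ge0 // ltW.
apply/andP; split; lra.
Qed.

Lemma samec_int_iff a b : samec a b -> (a \is a Num.int) = (b \is a Num.int).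
Proof.
move=> H; have [Hb|Hb] := boolP (b \is a Num.int).
  by rewrite (samec_int _ _ Hb H).
move/(samec_nint a b Hb): H => /andP [H1 H2].
apply/negP => Ha; move: H1 H2; rewrite -(floorK Ha) !ltr_int => H1 H2.
by move: H2; rewrite ltzD1 leNgt H1.
Qed.

End Samec.
Arguments samec_int {R a b}.
Arguments samec_nint {R a b}.
Arguments samec_conv {R a b c s}.
Arguments samec_refl {R}.
Arguments samec_sym {R a b}.
Arguments samec_trans {R a b c}.
Arguments samec_shift {R a b y}.
Arguments samec_int_iff {R a b}.
Section Topo.
Variable R : realType.
Variable d : nat.

Lemma contD (f g : 'rV[R]_d -> R) : continuous f -> continuous g -> continuous (f + g).
Proof. move=> hf hg x. apply: continuousD. exact: hf. exact: hg. Qed.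

Lemma contMc (f : 'rV[R]_d -> R) a : continuous f -> continuous (fun x => f x * a).
Proof. move=> hf x. apply: (@continuousM R _ f (fun=> a)). exact: hf. exact: cst_continuous. Qed.

Lemma lincont m (M : 'M[R]_(d, m)) i : continuous (fun x : 'rV[R]_d => (x *m M) 0 i).
Proof.
have E : (fun x : 'rV[R]_d => (x *m M) 0 i) =
         (fun x => \sum_(j <- index_enum 'I_d) x 0 j * M j i).
  by apply: funext => x; rewrite mxE.
rewrite E; elim: (index_enum 'I_d) => [|j s IH].
  have -> : (fun x : 'rV[R]_d => \sum_(j <- [::]) x 0 j * M j i) = fun=> 0.
    by apply: funext => x; rewrite big_nil.
  by move=> x; exact: cst_continuous.
have -> : (fun x : 'rV[R]_d => \sum_(j0 <- j :: s) x 0 j0 * M j0 i) =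
   (fun x => x 0 j * M j i) + (fun x => \sum_(j0 <- s) x 0 j0 * M j0 i).
  by apply: funext => x; rewrite big_cons.
apply: contD => //; apply: contMc; exact: coord_continuous.
Qed.

Lemma near_itv (h : 'rV[R]_d -> R) (x : 'rV[R]_d) lo hi :
  continuous h -> lo < h x < hi -> \forall y \near x, lo < h y < hi.
Proof.
move=> hc H.
have O : open [set r : R | lo < r < hi].
  have -> : [set r : R | lo < r < hi] = [set r | lo < r] `&` [set r | r < hi].
    by apply/seteqP; split => r /=; [move=> /andP [] | move=> [-> ->]].
  by apply: openI; [exact: open_gt | exact: open_lt].
exact: (hc x _ (open_nbhs_nbhs (conj O H))).
Qed.

Lemma transl_cont (v : 'rV[R]_d) : continuous (fun y : 'rV[R]_d => y + v).
Proof. by move=> y; apply: continuousD; [exact: cvg_id | exact: cst_continuous]. Qed.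

Lemma torus_open_img (W : set 'rV[R]_d) : open W -> open (piT R @` W : set (torus R d)).
Proof.
move=> oW; rewrite /open /= /quotient_open openE => y [x Wx Hxy].
have [z Hz] := piT_eqE Hxy.
have Wn : nbhs (y + mxR R z) W by rewrite -Hz; apply: open_nbhs_nbhs; split.
have := transl_cont (mxR R z) y W Wn.
move=> H; rewrite /interior; apply: (@filterS _ (nbhs y) _ _ _ _ H) => y1 /= Wy1; exists (y1 + mxR R z) => //.
by rewrite piT_shift.
Qed.

End Topo.
Section Strat.
Variable R : realType.
Variables (d k n : nat) (U : 'M[int]_(d, n)) (A : 'M[int]_(d, k)).
Hypothesis Asurj : forall y : 'rV[int]_k, exists m : 'rV[int]_d, m *m A = y.

Let g i (x : 'rV[R]_d) := (x *m mxR R U) 0 i.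
Let fA j (x : 'rV[R]_d) := (x *m mxR R A) 0 j.
Let Sof (t0 : torus R d) := [set t | Tphi R A t /\ intset R U t = intset R U t0].
Let lo (c : 'rV[R]_d) i :=
  if g i c \is a Num.int then g i c - 1 else (Num.floor (g i c))%:~R.
Let hi (c : 'rV[R]_d) i :=
  if g i c \is a Num.int then g i c + 1 else (Num.floor (g i c) + 1)%:~R.
Let V (c : 'rV[R]_d) :=
  [set x | (forall j, -1 < fA j x < 1) /\ (forall i, lo c i < g i x < hi c i)].

Lemma g_shift x (z : 'rV[int]_d) i : g i (x + mxR R z) = g i x + ((z *m U) 0 i)%:~R.
Proof. by rewrite /g mulmxDl -mxR_mul [LHS]mxE [X in _ + X = _]mxE. Qed.

Lemma intset_pi x i : intset R U (piT R x) i <-> g i x \is a Num.int.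
Proof.
rewrite /intset /=; have [z ->] := piT_eqE (piT_repr (piT R x)).
by rewrite -/(g i _) g_shift rpredDr ?intr_int.
Qed.

Lemma V_open c : open (V c).
Proof.
rewrite openE => x [H1 H2]; rewrite /interior.
have N1 : \forall y \near x, forall j, -1 < fA j y < 1.
  by apply: (@filter_forall _ _ _ _ (nbhs_filter x)) => j; apply: near_itv => //; exact: lincont.
have N2 : \forall y \near x, forall i, lo c i < g i y < hi c i.
  by apply: (@filter_forall _ _ _ _ (nbhs_filter x)) => i; apply: near_itv => //; exact: lincont.
by apply: (@filterS2 _ _ (nbhs_filter x) _ _ _ _ N1 N2) => y Hy1 Hy2; split.
Qed.

Lemma cell_V c x : cell R A U c x -> V c x.
Proof.
move=> [/LR_ker Hx Hc]; split.
  by move=> j; rewrite /fA Hx mxE; apply/andP; split; lra.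
move=> i; rewrite /lo /hi.
case: ifPn => Hi.
  by rewrite /g (samec_int Hi (Hc i)) ltrBlDr !ltrDl ltr01.
by apply/(samec_nint Hi); apply: Hc.
Qed.

Lemma V_cell c t : (piT R @` V c) t -> Sof (piT R c) t -> (piT R @` cell R A U c) t.
Proof.
move=> [x [Hx1 Hx2] <-] [[q [Hq Hqz]] HI].
have [z Hz] := piT_eqE (esym Hq).
have HxA : x *m mxR R A = 0.
  apply/matrixP => i j; rewrite ord1 [RHS]mxE; apply: int_abs_lt1.
    rewrite Hz mulmxDl -mxR_mul mxE; apply: rpredD; first exact: Hqz.
    by rewrite mxE intr_int.
  by rewrite ltr_norml; apply: Hx1.
exists x => //; split; first exact/LR_ker.
move=> i.
have Ei : (g i x \is a Num.int) = (g i c \is a Num.int).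
  have := congr1 (fun S => S i) HI => /= E.
  apply/idP/idP => H.
    by apply/intset_pi; rewrite -E; apply/intset_pi.
  by apply/intset_pi; rewrite E; apply/intset_pi.
move: (Hx2 i); rewrite /lo /hi; case: ifPn => Hi H.
  have Hgx : g i x \is a Num.int by rewrite Ei.
  have : g i x - g i c = 0.
    apply: int_abs_lt1; first by rewrite rpredB.
    by rewrite ltr_norml; move: H => /andP [? ?]; apply/andP; split; lra.
  move/eqP; rewrite subr_eq0 => /eqP E; change (samec R (g i x) (g i c)); rewrite E; exact: samec_refl.
exact/(samec_nint Hi).
Qed.

Lemma cell_S p c : LR R A p -> cell R A U p c -> Sof (piT R p) (piT R c).
Proof.
move=> Hp [Hc1 Hc2]; split.
  exists c; split => //; move/LR_ker: Hc1 => ->.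
  by move=> j; rewrite mxE rpred0.
apply/seteqP; split => i /intset_pi H; apply/intset_pi.
  by rewrite -(samec_int_iff (Hc2 i)).
by rewrite -/(g i c) (samec_int_iff (Hc2 i)).
Qed.

Lemma cell_conv p c s : LR R A p -> cell R A U p c -> 0 <= s <= 1 ->
  cell R A U p (p + s *: (c - p)).
Proof.
move=> Hp [Hc1 Hc2] Hs; split.
  apply/LR_ker; move/LR_ker: Hp => Hp; move/LR_ker: Hc1 => Hc1.
  by rewrite mulmxDl -scalemxAl mulmxBl Hp Hc1 subrr scaler0 addr0.
move=> i.
have -> : ((p + s *: (c - p)) *m mxR R U) 0 i = g i p + s * (g i c - g i p).
  by rewrite mulmxDl -scalemxAl mulmxBl [LHS]mxE [X in _ + X = _]mxE [X in _ + _ * X = _]mxE [X in _ + _ * (_ + X) = _]mxE.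
exact: samec_conv (samec_refl _) (Hc2 i).
Qed.

Lemma cell_shift p c' x y : LR R A p -> cell R A U p x -> LR R A c' ->
  cell R A U c' y -> piT R x = piT R y -> (piT R @` cell R A U p) (piT R c').
Proof.
move=> Hp [Hx1 Hx2] Hc' [Hy1 Hy2] Hxy.
have [z Hz] := piT_eqE (esym Hxy).
exists (c' + mxR R (- z)); last by rewrite piT_shift.
have Ez : mxR R (- z) = x - y.
  by rewrite mxR_opp Hz opprD addrA subrr add0r.
split.
  rewrite Ez; have -> : c' + (x - y) = c' - (y - x) by rewrite opprB.
  by apply: LR_sub => //; apply: LR_sub.
move=> i; change (samec R (g i (c' + mxR R (- z))) (g i p)); rewrite g_shift.
have E : g i x = g i y + ((- z *m U) 0 i)%:~R by rewrite -g_shift Ez addrC subrK.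
apply: (@samec_trans R _ (g i x)); last exact: Hx2.
rewrite E; apply: samec_shift; first exact: intr_int.
exact: samec_sym (Hy2 i).
Qed.

Lemma part_iii p : LR R A p ->
  piT R @` cell R A U p = HHL_stratum R A U (piT R p).
Proof.
move=> Hp.
have Hpp : cell R A U p p by split => // i; exact: samec_refl.
have Sp : Sof (piT R p) (piT R p) := @cell_S p p Hp Hpp.
rewrite /HHL_stratum -/(Sof (piT R p)).
apply/seteqP; split.
  move=> t [c Hc <-].
  pose h := fun s : R => piT R (p + s *: (c - p)).
  have hc : continuous h.
    move=> s; apply: continuous_comp; last exact: pi_continuous.
    apply: continuousD; first exact: cst_continuous.
    apply: continuousZ; [exact: cvg_id | exact: cst_continuous].
  have Bc : connected (h @` `[0, 1]).
    apply: connected_continuous_connected; first exact: segment_connected.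
    exact: continuous_subspaceT.
  have B0 : (h @` `[0, 1]) (piT R p).
    exists 0; first by rewrite /= in_itv /= lexx ler01.
    by rewrite /h scale0r addr0.
  have BS : h @` `[0, 1] `<=` Sof (piT R p).
    move=> u [s Hs <-].
    have Hs' : 0 <= s <= 1 by move: Hs; rewrite /= in_itv.
    exact: (@cell_S p _ Hp (@cell_conv p c s Hp Hc Hs')).
  apply: (connected_component_max B0 BS Bc).
  exists 1; first by rewrite /= in_itv /= lexx ler01.
  by rewrite /h scale1r addrC subrK.
move=> t Kt.
set K := connected_component (Sof (piT R p)) (piT R p).
have KS : K `<=` Sof (piT R p) by exact: connected_component_sub.
pose I2 : set 'rV[R]_d := fun c => [/\ LR R A c, Sof (piT R p) (piT R c) &
                                  ~ ((piT R @` cell R A U p) (piT R c))].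
set O2 := \bigcup_(c in I2) (piT R @` V c).
have E : K `&` (piT R @` cell R A U p) = K.
  apply: component_connected.
  - exists (piT R p); split; first exact: connected_component_refl.
    by exists p.
  - exists (piT R @` V p); first exact/torus_open_img/V_open.
    apply/seteqP; split => u [Ku Cu]; split => //.
      by case: Cu => x Hx <-; exists x => //; exact: cell_V.
    by apply: V_cell => //; apply: KS.
  - exists (~` O2).
      apply: open_closedC; apply: bigcup_open => c _.
      exact/torus_open_img/V_open.
    apply/seteqP; split => u [Ku Cu]; split => //.
      move=> [c [Hc1 Hc2 Hc3] Vu]; apply: Hc3.
      have Su : Sof (piT R c) u.
        have [Su1 Su2] := KS _ Ku; split => //; rewrite Su2; exact/esym/(proj2 Hc2).
      have [y Hy Hyu] := @V_cell c u Vu Su.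
      case: Cu => x Hx Hxu.
      by apply: (@cell_shift p c x y Hp Hx Hc1 Hy); rewrite Hxu Hyu.
    apply: contrapT => nC; apply: Cu.
    have [Tu _] := KS _ Ku.
    move: Tu; rewrite -part_a // => -[c Hc Hcu].
    exists c; first split => //.
      by rewrite Hcu; exact: KS.
      by rewrite Hcu.
    exists c => //; apply: cell_V; split => // i; exact: samec_refl.
by move: Kt; rewrite -/K -E => -[].
Qed.

End Strat.

Theorem lemma4p1 (R : realType) (d k n : nat)
  (U : 'M[int]_(d, n)) (A : 'M[int]_(d, k))
  (* the rays u_i (columns of U) are primitive and pairwise distinct *)
  (Uprim : primitive_cols U)
  (Udist : injective (fun i : 'I_n => col i U))
  (* X has no torus factors: the rays span N_X (x) R *)
  (Uspan : row_full (mxR R U)^T)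
  (* phibar^* : M_X -> M_Y is surjective *)
  (Asurj : forall y : 'rV[int]_k, exists m : 'rV[int]_d, m *m A = y) :
  (* (i) T_phi = L_R / L via the natural map *)
  [/\ piT R @` LR R A = Tphi R A,
      (forall p p' : 'rV[R]_d, LR R A p -> LR R A p' ->
         piT R p = piT R p' <-> exists l : 'rV[int]_d, inL A l /\ p - p' = mxR R l),
  (* the induced cell structure coincides with the HHL stratification *)
      (forall p : 'rV[R]_d, LR R A p ->
         piT R @` cell R A U p = HHL_stratum R A U (piT R p)) &
  (* (ii) the HHL line bundle on the image of the cell sigma of p is O_X(-psi(sigma)) *)
      (forall (p q : 'rV[R]_d), LR R A p -> (piT R @` cell R A U p) (piT R q) ->
         lin_equiv U (HHL_divisor R U q) (- psi R U p))].
Proof.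
split.
- exact: part_a.
- exact: part_b.
- by move=> p Hp; apply: part_iii.
- exact: part_ii.
Qed.
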